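(* Let $G$ be a non-complete double-critical $k$-chromatic graph. Then every vertex of $G$ has at least $k+1$ neighbours.
   Context: All graphs are finite and simple. A graph $G$ is (vertex-)critical if $\chi(G-v)<\chi(G)$ for every vertex $v\in V(G)$. A critical graph $G$ is double-critical if $\chi(G-x-y)\le\chi(G)-2$ for every edge $xy\in E(G)$. *)

(* Defs.v *)
From mathcomp Require Import all_boot.
Set Implicit Arguments. Unset Strict Implicit. Unset Printing Implicit Defensive.

Record sgraph := SGraph {
  vert :> finType;
  adj : rel vert;
  adj_sym : symmetric adj;
  adj_irr : irreflexive adj }.

Section Chrom.
Variable G : sgraph.

Definition colorable (S : {set G}) (k : nat) : bool :=
  [exists f : {ffun G -> 'I_k},
     [forall x in S, forall y in S, adj x y ==> (f x != f y)]].

Lemma ex_colorable (S : {set G}) : exists k, colorable S k.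
Proof.
exists #|G|; apply/existsP; exists [ffun x => enum_rank x].
apply/forallP => x; apply/implyP => _; apply/forallP => y; apply/implyP => _.
apply/implyP => exy; rewrite !ffunE; apply/negP => /eqP/enum_rank_inj exy'.
by move: exy; rewrite exy' adj_irr.
Qed.

Definition chi_set (S : {set G}) : nat := ex_minn (ex_colorable S).

Definition chromatic_number : nat := chi_set setT.

Definition critical : Prop :=
  forall v : G, chi_set (setT :\ v) < chromatic_number.

Definition double_critical : Prop :=
  critical /\
  forall x y : G, adj x y -> chi_set (setT :\ x :\ y) <= chromatic_number - 2.

Definition complete : Prop := forall x y : G, x != y -> adj x y.

End Chrom.

(* Main.v *)
Require Import Defs.
From mathcomp Require Import all_boot.
From mathcomp Require Import zify.
Set Implicit Arguments. Unset Strict Implicit. Unset Printing Implicit Defensive.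

Section Aux.
Variable G : sgraph.

Lemma colorable_nat (S : {set G}) n (c : G -> nat) :
  0 < n -> (forall z, c z < n) ->
  (forall x y, x \in S -> y \in S -> adj x y -> c x != c y) -> colorable S n.
Proof.
case: n => // n _ Hc Hp; apply/existsP; exists [ffun z => inord (c z)].
apply/forallP => x; apply/implyP => xS; apply/forallP => y; apply/implyP => yS.
apply/implyP => exy; rewrite !ffunE; apply/negP => /eqP /(congr1 val).
rewrite /= !inordK ?Hc // => /eqP; apply/negP; exact: Hp.
Qed.

Lemma col_get (S : {set G}) n : colorable S n ->
  exists f : {ffun G -> 'I_n}, forall x y, x \in S -> y \in S -> adj x y -> (f x : nat) != f y.
Proof.
case/existsP => f /forallP Hf; exists f => x y xS yS exy.
by move: (Hf x) => /implyP /(_ xS) /forallP /(_ y) /implyP /(_ yS) /implyP /(_ exy).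
Qed.

Lemma chi_col (S : {set G}) : colorable S (chi_set S).
Proof. by rewrite /chi_set; case: ex_minnP. Qed.
Lemma chi_min (S : {set G}) n : colorable S n -> chi_set S <= n.
Proof. by rewrite /chi_set; case: ex_minnP => m _ H /H. Qed.

Lemma chi_add (S : {set G}) z : chi_set (z |: S) <= (chi_set S).+1.
Proof.
have [f Hf] := col_get (chi_col S).
apply: chi_min; apply: (@colorable_nat _ _ (fun x => if x == z then chi_set S else f x)) => //.
  by move=> x; case: ifP => // _; rewrite ltnS ltnW.
move=> x y xS yS.
case: (eqVneq x z) => [->|xz]; case: (eqVneq y z) => [->|yz] exy /=.
- by rewrite adj_irr in exy.
- by rewrite eq_sym ltn_eqF.
- by rewrite ltn_eqF.
- have xS' : x \in S by move: xS; rewrite in_setU1 (negbTE xz).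
  have yS' : y \in S by move: yS; rewrite in_setU1 (negbTE yz).
  by apply: Hf.
Qed.

Lemma clique_le (S K : {set G}) n : colorable S n -> K \subset S ->
  (forall x y, x \in K -> y \in K -> x != y -> adj x y) -> #|K| <= n.
Proof.
move=> /col_get [f Hf] /subsetP KS HK.
have inj : {in K &, injective f}.
  move=> x y xK yK fxy; apply/eqP; apply/negPn/negP => nxy.
  by move: (Hf x y (KS _ xK) (KS _ yK) (HK _ _ xK yK nxy)); rewrite fxy eqxx.
rewrite -(card_in_imset inj); apply: leq_trans (max_card _) _; by rewrite card_ord.
Qed.

Lemma count_cover (A : {set G}) m (f : G -> 'I_m) :
  (forall i, exists2 w, w \in A & f w = i) -> m <= #|A|.
Proof.
move=> H; have : [set: 'I_m] \subset f @: A.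
  by apply/subsetP => i _; case: (H i) => w wA <-; apply: imset_f.
move/subset_leq_card; rewrite cardsT card_ord => Hle.
exact: leq_trans Hle (leq_imset_card _ _).
Qed.

Definition common (x y : G) := [set w | adj x w && adj y w].

Lemma common_hit k x y m (f : G -> 'I_m) :
  chromatic_number G = k -> m <= k - 2 ->
  (forall p q, p \in setT :\ x :\ y -> q \in setT :\ x :\ y -> adj p q -> (f p : nat) != f q) ->
  adj x y ->
  forall i : 'I_m, exists2 w, w \in common x y & f w = i.
Proof.
move=> Hk Hm Hf exy i.
case: (boolP [exists w, (w \in common x y) && (f w == i)]) => [/existsP [w /andP [wc /eqP fw]]|Hn]; first by exists w.
exfalso.
have Hn' : forall w, adj x w -> adj y w -> (f w : nat) != i.
  move=> w a1 a2; apply/negP => fw; move/negP: Hn; apply; apply/existsP; exists w.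
  by rewrite inE a1 a2 /=; apply/eqP/val_inj/eqP.
pose New z := (z == y) || ((z \in setT :\ x :\ y) && ((f z : nat) == i) && adj x z).
have : colorable [set: G] m.+1.
  apply: (@colorable_nat setT m.+1 (fun z => if New z then m else if z == x then (i : nat) else f z)) => //.
    by move=> z; case: ifP => _ //; case: ifP => _; rewrite ltnS ltnW.
  have inS : forall z, z != x -> z != y -> z \in setT :\ x :\ y.
    by move=> z zx zy; rewrite !inE zx zy.
  move=> p q _ _ epq /=.
  case: (boolP (New p)) => Np; case: (boolP (New q)) => Nq.
  - exfalso; move: Np Nq epq; rewrite /New.
    case: (eqVneq p y) => [->|py] /=; case: (eqVneq q y) => [->|qy] /=.
    + by move=> _ _; rewrite adj_irr.
    + move=> _ /andP [/andP [qS /eqP fq] xq] epq.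
      by move: (Hn' q xq epq); rewrite fq eqxx.
    + move=> /andP [/andP [pS /eqP fp] xp] _ epq.
      by move: (Hn' p xp); rewrite adj_sym epq fp eqxx => /(_ isT).
    + move=> /andP [/andP [pS /eqP fp] xp] /andP [/andP [qS /eqP fq] xq] epq.
      by move: (Hf p q pS qS epq); rewrite fp fq eqxx.
  - by case: ifP => _; rewrite eq_sym ltn_eqF.
  - by case: ifP => _; rewrite ltn_eqF.
  - move: Np Nq; rewrite /New !negb_or => /andP [py Np] /andP [qy Nq].
    case: (eqVneq p x) => [pe|px]; case: (eqVneq q x) => [qe|qx].
    + by rewrite pe qe adj_irr in epq.
    + rewrite pe in epq; rewrite (inS _ qx qy) epq andbT /= in Nq.
      by rewrite eq_sym.
    + rewrite qe adj_sym in epq; rewrite (inS _ px py) epq andbT /= in Np.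
      by [].
    + exact: Hf (inS _ px py) (inS _ qx qy) epq.
move/chi_min => H; move: Hk; rewrite /chromatic_number => Hk'; rewrite Hk' in H.
have := ltn_ord i; lia.
Qed.

Lemma edge_common k x y : chromatic_number G = k -> double_critical G -> adj x y ->
  k - 2 <= #|common x y|.
Proof.
move=> Hk [Hc Hd] exy.
have Hm := Hd x y exy; rewrite Hk in Hm.
have [f Hf] := col_get (chi_col (setT :\ x :\ y)).
have yx : y != x by apply: contraTneq exy => ->; rewrite adj_irr.
have H1 : k <= (chi_set (setT :\ x :\ y)).+2.
  move: Hk; rewrite /chromatic_number => <-.
  rewrite -{1}(setD1K (in_setT x)).
  apply: leq_trans (chi_add _ _) _; rewrite ltnS.
  rewrite -{1}(@setD1K _ y (setT :\ x)); last by rewrite !inE yx.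
  exact: chi_add.
suff : chi_set (setT :\ x :\ y) <= #|common x y| by lia.
apply: (count_cover (f := f)); exact: common_hit Hk Hm Hf exy.
Qed.

Lemma deg_ge k (v : G) : chromatic_number G = k -> critical G -> k - 1 <= #|[set w | adj v w]|.
Proof.
move=> Hk Hc.
have Hm := Hc v; rewrite /chromatic_number in Hk; rewrite /chromatic_number Hk in Hm.
have H1 : k <= (chi_set (setT :\ v)).+1.
  by rewrite -Hk -{1}(setD1K (in_setT v)); apply: chi_add.
have [f Hf] := col_get (chi_col (setT :\ v)).
suff : chi_set (setT :\ v) <= #|[set w | adj v w]| by lia.
apply: (count_cover (f:=f)) => i.
case: (boolP [exists w : G, adj v w && (f w == i)]) => [/existsP [w /andP [vw /eqP fw]]|Hn].
  by exists w; rewrite ?inE.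
exfalso.
have : colorable [set: G] (chi_set (setT :\ v)).
  apply: (@colorable_nat setT _ (fun z => if z == v then (i:nat) else f z)).
  - exact: (leq_ltn_trans (leq0n i) (ltn_ord i)).
  - by move=> z; case: ifP.
  - move=> p q _ _.
    case: (eqVneq p v) => [->|pv]; case: (eqVneq q v) => [->|qv] epq /=.
    + by rewrite adj_irr in epq.
    + rewrite ?eqxx ?(negbTE qv); apply/negP => /eqP fq; move/negP: Hn; apply; apply/existsP; exists q.
      by rewrite epq /=; apply/eqP/val_inj; rewrite /= -fq.
    + rewrite ?eqxx ?(negbTE pv); apply/negP => /eqP fp; move/negP: Hn; apply; apply/existsP; exists p.
      by rewrite adj_sym epq /=; apply/eqP/val_inj; rewrite /= fp.
    + by rewrite ?(negbTE pv) ?(negbTE qv); apply: Hf => //; rewrite !inE ?pv ?qv.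
move/chi_min; rewrite Hk; lia.
Qed.
End Aux.

Theorem proposition11 (G : sgraph) (k : nat) :
  chromatic_number G = k -> double_critical G -> ~ complete G ->
  forall v : G, k.+1 <= #|[set w : G | adj v w]|.
Proof.
move=> Hk Hdc Hnc v.
have [Hc Hd] := Hdc.
have Hdeg := deg_ge v Hk Hc.
rewrite ltnNge; apply/negP => Hle.
set N := [set w | adj v w] in Hdeg Hle *.
have inN : forall u, (u \in N) = adj v u by move=> u; rewrite inE.
case: (boolP [exists a, exists b, [&& a \in N, b \in N, a != b & ~~ adj a b]]).
- case/existsP => a /existsP [b /and4P [aN bN ab nab]].
  have va : adj v a by rewrite -inN.
  have vb : adj v b by rewrite -inN.
  have claim : forall w, w \in N -> w != a -> w != b -> adj b w.
    move=> w wN wa wb; apply/negPn/negP => nbw.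
    have sub : common v b \subset N :\ a :\ b :\ w.
      apply/subsetP => u; rewrite inE => /andP [vu bu].
      have ua : u != a by apply: contraTneq bu => ->; rewrite adj_sym.
      have ub : u != b by apply: contraTneq bu => ->; rewrite adj_irr.
      have uw : u != w by apply: contraTneq bu => ->.
      by rewrite !in_setD1 ua ub uw inN vu.
    have := edge_common Hk Hdc vb.
    have := subset_leq_card sub.
    have c1 := cardsD1 a N; have c2 := cardsD1 b (N :\ a); have c3 := cardsD1 w (N :\ a :\ b).
    rewrite aN /= in c1.
    rewrite !in_setD1 bN eq_sym ab /= in c2.
    rewrite !in_setD1 wN wa wb /= in c3.
    lia.
  set S := setT :\ v :\ a.
  have [f Hf] := col_get (chi_col S).
  have Hm : chi_set S <= k - 2 by rewrite -Hk; exact: Hd v a va.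
  have bv : b != v by apply: contraTneq vb => ->; rewrite adj_irr.
  have bS : b \in S by rewrite !inE bv eq_sym ab.
  have [w wc fw] := common_hit Hk Hm Hf va (f b).
  move: wc; rewrite inE => /andP [vw aw].
  have wv : w != v by apply: contraTneq vw => ->; rewrite adj_irr.
  have wa : w != a by apply: contraTneq aw => ->; rewrite adj_irr.
  have wS : w \in S by rewrite !inE wv wa.
  have wb : w != b by apply: contraTneq aw => ->.
  have wN : w \in N by rewrite inN.
  by have := Hf b w bS wS (claim w wN wa wb); rewrite fw eqxx.
- move=> Hn.
  have Hcl : forall a b, a \in N -> b \in N -> a != b -> adj a b.
    move=> a b aN bN ab; apply/negPn/negP => nab; move/negP: Hn; apply.
    by apply/existsP; exists a; apply/existsP; exists b; rewrite aN bN ab nab.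
  set K := v |: N.
  have HK : forall x y, x \in K -> y \in K -> x != y -> adj x y.
    move=> x y /setU1P [-> | xN] /setU1P [-> | yN] xy.
    - by rewrite eqxx in xy.
    - by rewrite -inN.
    - by rewrite adj_sym -inN.
    - exact: Hcl.
  have vN : v \notin N by rewrite inN adj_irr.
  have cK : #|K| = #|N|.+1 by rewrite cardsU1 vN.
  case: (boolP [forall w, w \in K]) => [/forallP allK | ].
  + by apply: Hnc => x y xy; exact: HK (allK x) (allK y) xy.
  + rewrite negb_forall => /existsP [w wK].
    have sub : K \subset setT :\ w.
      by apply/subsetP => z zK; rewrite !inE andbT; apply: contraTneq zK => ->.
    have := clique_le (chi_col (setT :\ w)) sub HK.
    have := Hc w; rewrite Hk.
    lia.
Qed.
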